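(* Let $r$, $n$, $t$ be positive integers with $2\le t\le r-1$ and $n=3r-t$. Then: (1) if $t\le \frac{r+5}{5}$, then $\rho_2(K(n,r))=3$; (2) if $\frac{r+5}{5}<t\le \frac{2r+9}{9}$, then $\rho_2(K(n,r))=4$.
   Context: For integers $n\ge 2r$, the Kneser graph $K(n,r)$ has as vertices the $r$-element subsets of $[n]=\{1,\dots,n\}$, two vertices being adjacent iff they are disjoint. A $2$-packing of a graph $G$ is a set of vertices pairwise at distance at least $3$ in $G$; $\rho_2(G)$ is the maximum cardinality of a $2$-packing. *)

(* Defs.v *)
From mathcomp Require Import all_boot.
Set Implicit Arguments. Unset Strict Implicit. Unset Printing Implicit Defensive.

(* A 2-packing: vertices pairwise at distance >= 3, i.e. distinct vertices
   are neither adjacent nor have a common neighbour (distance 0,1,2 excluded;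
   distance may be infinite). *)
Definition two_packing (V : finType) (adj : rel V) (S : {set V}) : bool :=
  [forall u in S, forall v in S,
     (u != v) ==> (~~ adj u v && ~~ [exists w, adj u w && adj w v])].

Definition rho2 (V : finType) (adj : rel V) : nat :=
  \max_(S : {set V} | two_packing adj S) #|S|.

Definition kneser_vertex (n r : nat) := {A : {set 'I_n} | #|A| == r}.

Definition kneser_adj (n r : nat) : rel (kneser_vertex n r) :=
  fun A B => [disjoint (val A) & (val B)].

Definition rho2_kneser (n r : nat) : nat := rho2 (@kneser_adj n r).

(* Main.v *)
Require Import Defs.
From mathcomp Require Import all_boot zify.
Set Implicit Arguments. Unset Strict Implicit. Unset Printing Implicit Defensive.

Lemma card_lt_sub (T : finType) (C : {set T}) k : k <= #|C| ->
  exists W : {set T}, W \subset C /\ #|W| = k.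
Proof.
move=> hk; exists [set x in take k (enum C)]; split.
  by apply/subsetP => x; rewrite inE => /mem_take; rewrite mem_enum.
rewrite cardsE; move/card_uniqP: (take_uniq k (enum_uniq (mem C))) ->.
by rewrite size_take -cardE; case: ltnP hk => // h1 h2; apply/eqP; rewrite eqn_leq h1 h2.
Qed.

Lemma disj_card (T : finType) (A B : {set T}) :
  ~~ [disjoint A & B] = (0 < #|A :&: B|).
Proof. by rewrite -setI_eq0 -cards_eq0 lt0n. Qed.

Lemma card_le_n n (A : {set 'I_n}) : #|A| <= n.
Proof. by have := max_card (mem A); rewrite card_ord. Qed.

Lemma key_common n r t (u v : kneser_vertex n r) : n = 3 * r - t -> t <= r ->
  [exists w, kneser_adj u w && kneser_adj w v] = (t <= #|val u :&: val v|).
Proof.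
move=> hn htr; have hu : #|val u| = r := eqP (valP u).
have hv : #|val v| = r := eqP (valP v).
have hUI := cardsUI (val u) (val v).
have hC := cardsCs (val u :|: val v); rewrite card_ord in hC.
have hle := card_le_n (val u :|: val v).
apply/existsP/idP.
  case=> w /andP[]; rewrite /kneser_adj => d1 d2.
  have hw : #|val w| = r := eqP (valP w).
  have : val w \subset ~: (val u :|: val v).
    rewrite setCU subsetI -!disjoints_subset d2 andbT.
    by rewrite disjoint_sym.
  move/subset_leq_card; rewrite hw => h.
  have := card_le_n (~: (val u :|: val v)). lia.
move=> hs.
have [W [hW hWc]] : exists W : {set 'I_n}, W \subset ~: (val u :|: val v) /\ #|W| = r.
  apply: card_lt_sub. have := card_le_n (~: (val u :|: val v)). lia.
have hWr : #|W| == r by apply/eqP.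
exists (exist _ W hWr); rewrite /kneser_adj /=.
move: hW; rewrite setCU subsetI => /andP[h1 h2].
by rewrite disjoint_sym !disjoints_subset h1 h2.
Qed.

Lemma pair_cond n r t (u v : kneser_vertex n r) : n = 3 * r - t -> t <= r ->
  (~~ kneser_adj u v && ~~ [exists w, kneser_adj u w && kneser_adj w v])
  = (0 < #|val u :&: val v| < t).
Proof.
by move=> hn htr; rewrite (key_common u v hn htr) /kneser_adj disj_card -ltnNge.
Qed.


Lemma packing_pair (V : finType) (adj : rel V) S u v :
  two_packing adj S -> u \in S -> v \in S -> u != v ->
  ~~ adj u v && ~~ [exists w, adj u w && adj w v].
Proof.
move=> /forallP /(_ u); rewrite /= => H uS vS; move: H; rewrite uS /=.
by move=> /forallP /(_ v); rewrite vS /= => /implyP.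
Qed.

Lemma cardU_le (T : finType) (A B : {set T}) : #|A :|: B| <= #|A| + #|B|.
Proof. have := cardsUI A B; lia. Qed.

Lemma cardUI_le (T : finType) (X Y Z : {set T}) :
  #|(X :|: Y) :&: Z| <= #|X :&: Z| + #|Y :&: Z|.
Proof. by rewrite setIUl cardU_le. Qed.

Lemma step (T : finType) (X Z : {set T}) : #|X| + #|Z| <= #|X :|: Z| + #|X :&: Z|.
Proof. by rewrite cardsUI. Qed.

Lemma union4 n (A B C D : {set 'I_n}) :
  #|A| + #|B| + #|C| + #|D| <= #|A :|: B :|: C :|: D| + (#|A :&: B| + #|A :&: C| + #|A :&: D|
     + #|B :&: C| + #|B :&: D| + #|C :&: D|).
Proof.
have h1 := step A B. have h2 := step (A :|: B) C. have h3 := step (A :|: B :|: C) D.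
have e2 := cardUI_le A B C. have e3 := cardUI_le (A :|: B) C D.
have e3' := cardUI_le A B D.
lia.
Qed.

Lemma bonf4 n (A B C D : {set 'I_n}) :
  #|A| + #|B| + #|C| + #|D| <= n + (#|A :&: B| + #|A :&: C| + #|A :&: D|
     + #|B :&: C| + #|B :&: D| + #|C :&: D|).
Proof.
apply: leq_trans (union4 A B C D) _; rewrite leq_add2r; exact: card_le_n.
Qed.

Lemma bonf5 n (A B C D E : {set 'I_n}) :
  #|A| + #|B| + #|C| + #|D| + #|E| <= n + (#|A :&: B| + #|A :&: C| + #|A :&: D|
     + #|B :&: C| + #|B :&: D| + #|C :&: D| + #|A :&: E| + #|B :&: E| + #|C :&: E| + #|D :&: E|).
Proof.
have h0 := union4 A B C D.
have h4 := step (A :|: B :|: C :|: D) E.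
have e4 := cardUI_le (A :|: B :|: C) D E.
have e4' := cardUI_le (A :|: B) C E.
have e4'' := cardUI_le A B E.
have := card_le_n (A :|: B :|: C :|: D :|: E).
move: h0 h4 e4 e4' e4''.
move: #|A| #|B| #|C| #|D| #|E| #|A :&: B| #|A :&: C| #|A :&: D| #|B :&: C| #|B :&: D| #|C :&: D|
  #|A :&: E| #|B :&: E| #|C :&: E| #|D :&: E|.
move: #|A :|: B :|: C :|: D :|: E| #|(A :|: B :|: C :|: D) :&: E| #|A :|: B :|: C :|: D|
  #|(A :|: B :|: C) :&: E| #|(A :|: B) :&: E|.
move=> *; lia.
Qed.

Lemma arith4 n r t x1 x2 x3 x4 x5 x6 : n = 3 * r - t -> 5 * t <= r + 5 -> t <= r ->
  x6 < t -> x5 < t -> x4 < t -> x3 < t -> x2 < t -> x1 < t ->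
  r + r + r + r <= n + (x1 + x2 + x3 + x4 + x5 + x6) -> False.
Proof. lia. Qed.

Lemma upper4 n r t (S : {set kneser_vertex n r}) : n = 3 * r - t -> t <= r ->
  0 < t -> 5 * t <= r + 5 -> two_packing (@kneser_adj n r) S -> #|S| <= 3.
Proof.
move=> hn htr ht h5 hS; rewrite leqNgt; apply/negP => h4.
have hu := enum_uniq (mem S).
have hm : forall x, x \in enum S -> x \in S by move=> x; rewrite mem_enum.
have hsz : 4 <= size (enum S) by rewrite -cardE.
have hc : forall u v, u \in S -> v \in S -> u != v -> #|val u :&: val v| < t.
  move=> u v uS vS uv; have := packing_pair hS uS vS uv.
  by rewrite (pair_cond u v hn htr) => /andP[].
move: hu hm hsz; case: (enum S) => [|a [|b [|c [|d rest]]]] //= hu hm _.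
have aS := hm a (mem_head _ _).
have bS : b \in S by apply: hm; rewrite !inE eqxx ?orbT.
have cS : c \in S by apply: hm; rewrite !inE eqxx ?orbT.
have dS : d \in S by apply: hm; rewrite !inE eqxx ?orbT.
move: hu; rewrite !inE !negb_or => /and5P[/and4P[ab ac ad _] /and3P[bc bd _] /andP[cd _] _ _].
have := bonf4 (val a) (val b) (val c) (val d).
rewrite !(eqP (valP a)) !(eqP (valP b)) !(eqP (valP c)) !(eqP (valP d)).
have := hc _ _ aS bS ab. have := hc _ _ aS cS ac. have := hc _ _ aS dS ad.
have := hc _ _ bS cS bc. have := hc _ _ bS dS bd. have := hc _ _ cS dS cd.
move: (#|val a :&: val b|) (#|val a :&: val c|) (#|val a :&: val d|)
  (#|val b :&: val c|) (#|val b :&: val d|) (#|val c :&: val d|).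
move=> x1 x2 x3 x4 x5 x6; apply: (@arith4 n r t x1 x2 x3 x4 x5 x6 hn h5 htr).
Qed.

Lemma arith5 n r t x1 x2 x3 x4 x5 x6 x7 x8 x9 x10 : n = 3 * r - t -> 9 * t <= 2 * r + 9 -> t <= r ->
  x10 < t -> x9 < t -> x8 < t -> x7 < t -> x6 < t -> x5 < t -> x4 < t -> x3 < t -> x2 < t -> x1 < t ->
  r + r + r + r + r <= n + (x1 + x2 + x3 + x4 + x5 + x6 + x7 + x8 + x9 + x10) -> False.
Proof. lia. Qed.

Lemma upper5 n r t (S : {set kneser_vertex n r}) : n = 3 * r - t -> t <= r ->
  9 * t <= 2 * r + 9 -> two_packing (@kneser_adj n r) S -> #|S| <= 4.
Proof.
move=> hn htr h5 hS; rewrite leqNgt; apply/negP => h4.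
have hu := enum_uniq (mem S).
have hm : forall x, x \in enum S -> x \in S by move=> x; rewrite mem_enum.
have hsz : 5 <= size (enum S) by rewrite -cardE.
have hc : forall u v, u \in S -> v \in S -> u != v -> #|val u :&: val v| < t.
  move=> u v uS vS uv; have := packing_pair hS uS vS uv.
  by rewrite (pair_cond u v hn htr) => /andP[].
move: hu hm hsz; case: (enum S) => [|a [|b [|c [|d [|e rest]]]]] //= hu hm _.
have aS := hm a (mem_head _ _).
have bS : b \in S by apply: hm; rewrite !inE eqxx ?orbT.
have cS : c \in S by apply: hm; rewrite !inE eqxx ?orbT.
have dS : d \in S by apply: hm; rewrite !inE eqxx ?orbT.
have eS : e \in S by apply: hm; rewrite !inE eqxx ?orbT.
move: hu; rewrite !inE !negb_or => /andP[/and5P[ab ac ad ae _] /andP[/and4P[bc bd be _] /andP[/and3P[cd ce _] /andP[/andP[de _] _]]]].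
have := bonf5 (val a) (val b) (val c) (val d) (val e).
rewrite !(eqP (valP a)) !(eqP (valP b)) !(eqP (valP c)) !(eqP (valP d)) !(eqP (valP e)).
have := hc _ _ aS bS ab. have := hc _ _ aS cS ac. have := hc _ _ aS dS ad.
have := hc _ _ bS cS bc. have := hc _ _ bS dS bd. have := hc _ _ cS dS cd.
have := hc _ _ aS eS ae. have := hc _ _ bS eS be. have := hc _ _ cS eS ce.
have := hc _ _ dS eS de.
move: (#|val a :&: val b|) (#|val a :&: val c|) (#|val a :&: val d|)
  (#|val b :&: val c|) (#|val b :&: val d|) (#|val c :&: val d|)
  (#|val a :&: val e|) (#|val b :&: val e|) (#|val c :&: val e|) (#|val d :&: val e|).
move=> x1 x2 x3 x4 x5 x6 x7 x8 x9 x10.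
apply: (@arith5 n r t x1 x2 x3 x4 x5 x6 x7 x8 x9 x10 hn h5 htr).
Qed.


Lemma lower n r t m (F : 'I_m -> kneser_vertex n r) : n = 3 * r - t -> t <= r ->
  (forall i j, i != j -> 0 < #|val (F i) :&: val (F j)| < t) -> m <= rho2_kneser n r.
Proof.
move=> hn htr H.
have Finj : injective F.
  move=> i j eFij; apply/eqP; apply/negP => /negP hij.
  have := H i j hij; rewrite eFij setIid (eqP (valP (F j))).
  move=> /andP[_]; rewrite ltnNge htr //.
have hP : two_packing (@kneser_adj n r) (F @: setT).
  apply/forallP => u; apply/implyP => /imsetP [i _ ->].
  apply/forallP => v; apply/implyP => /imsetP [j _ ->].
  apply/implyP => hij; rewrite (pair_cond (F i) (F j) hn htr); apply: H.
  by apply: contraNneq hij => ->.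
apply: leq_trans (leq_bigmax_cond _ hP).
by rewrite card_imset // cardsT card_ord.
Qed.

Lemma sum_lt M a : \sum_(l < M) (if l < a then 1 else 0) = minn a M.
Proof.
elim: M => [|M IH]; first by rewrite big_ord0 minn0.
rewrite big_ord_recr /= IH; case: ltnP => h; lia.
Qed.

Lemma card_blocks K M (P : pred nat) (s : nat -> nat) : (forall k, s k <= M) ->
  #|[set w : 'I_K * 'I_M | P w.1 && (w.2 < s w.1)]| = \sum_(k < K | P k) s k.
Proof.
move=> hs; rewrite -sum1_card big_mkcond /=.
set A := [set w : 'I_K * 'I_M | _].
transitivity (\sum_(k < K) \sum_(l < M) (if (k, l) \in A then 1 else 0)).
  by rewrite pair_bigA /=; apply: eq_bigr => -[k l].
rewrite [RHS]big_mkcond /=.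
apply: eq_bigr => k _.
case hk : (P k).
  transitivity (\sum_(l < M) (if l < s k then 1 else 0)).
    by apply: eq_bigr => l _; rewrite inE /= hk.
  rewrite sum_lt; have := hs k; lia.
rewrite big1 // => l _; by rewrite inE /= hk.
Qed.

Lemma imset_cardI (aT rT : finType) (f : aT -> rT) (D X Y : {set aT}) :
  {in D &, injective f} -> X \subset D -> Y \subset D ->
  #|f @: X :&: f @: Y| = #|X :&: Y|.
Proof.
move=> hf hX hY.
have cX : #|f @: X| = #|X| by apply: card_in_imset; apply: sub_in2 hf; apply/subsetP.
have cY : #|f @: Y| = #|Y| by apply: card_in_imset; apply: sub_in2 hf; apply/subsetP.
have cXY : #|f @: (X :|: Y)| = #|X :|: Y|.
  by apply: card_in_imset; apply: sub_in2 hf; apply/subsetP; rewrite subUset hX hY.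
have := cardsUI X Y; have := cardsUI (f @: X) (f @: Y); rewrite -imsetU; lia.
Qed.

Lemma construct n r t m K M (mm : nat -> nat -> bool) (s : nat -> nat) : 0 < n ->
  (forall k, s k <= M) -> \sum_(k < K) s k <= n ->
  (forall i : 'I_m, \sum_(k < K | mm k i) s k = r) ->
  (forall i j : 'I_m, i != j -> 0 < \sum_(k < K | mm k i && mm k j) s k < t) ->
  exists F : 'I_m -> kneser_vertex n r,
    forall i j, i != j -> 0 < #|val (F i) :&: val (F j)| < t.
Proof.
case: n => [//|n'] _ hs hsum hr hij.
pose A (i : 'I_m) := [set w : 'I_K * 'I_M | mm w.1 i && (w.2 < s w.1)].
pose D := [set w : 'I_K * 'I_M | predT w.1 && (w.2 < s w.1)].
have cD : #|D| = \sum_(k < K) s k by rewrite (@card_blocks K M predT s hs) big_mkcond.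
pose f (w : 'I_K * 'I_M) : 'I_n'.+1 := inord (index w (enum D)).
have fv : forall w, w \in D -> val (f w) = index w (enum D).
  move=> w wD; rewrite /f /= inordK // ltnS.
  have : index w (enum D) < size (enum D) by rewrite index_mem mem_enum.
  rewrite -cardE cD => h; rewrite -ltnS; exact: leq_trans h hsum.
have finj : {in D &, injective f}.
  move=> x y xD yD /(congr1 val); rewrite !fv // => e.
  have xe : x \in enum D by rewrite mem_enum.
  have ye : y \in enum D by rewrite mem_enum.
  exact: (index_inj x xe ye e).
have AD : forall i, A i \subset D by move=> i; apply/subsetP => w; rewrite !inE => /andP[].
have cA : forall i, #|A i| = r by move=> i; rewrite (@card_blocks K M (mm^~ i) s hs).
have hF : forall i, #|f @: A i| == r.
  move=> i; rewrite card_in_imset ?cA //; apply: sub_in2 finj; apply/subsetP; exact: AD.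
exists (fun i => exist _ (f @: A i) (hF i)) => i j ij /=.
rewrite (imset_cardI finj (AD i) (AD j)).
have -> : A i :&: A j = [set w : 'I_K * 'I_M | (fun k => mm k i && mm k j) w.1 && (w.2 < s w.1)].
  by apply/setP => w; rewrite !inE /=; case: (mm w.1 i); case: (mm w.1 j); case: (w.2 < s w.1).
by rewrite (@card_blocks K M (fun k => mm k i && mm k j) s hs); apply: hij.
Qed.


Definition mm3 (k i : nat) : bool :=
  match k with
  | 0 => i == 0 | 1 => i == 1 | 2 => i == 2
  | 3 => (i == 0) || (i == 1) | 4 => (i == 0) || (i == 2) | 5 => (i == 1) || (i == 2)
  | _ => false end.

Definition mm4 (k i : nat) : bool :=
  match k with
  | 0 => i == 0 | 1 => i == 1 | 2 => i == 2 | 3 => i == 3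
  | 4 => (i == 0) || (i == 1) | 5 => (i == 0) || (i == 2) | 6 => (i == 0) || (i == 3)
  | 7 => (i == 1) || (i == 2) | 8 => (i == 1) || (i == 3) | 9 => (i == 2) || (i == 3)
  | _ => false end.

Lemma constr3 n r t : n = 3 * r - t -> 2 <= t -> 2 * t <= r + 2 ->
  exists F : 'I_3 -> kneser_vertex n r,
    forall i j, i != j -> 0 < #|val (F i) :&: val (F j)| < t.
Proof.
move=> hn ht hr.
apply: (@construct n r t 3 6 r mm3 (fun k => if k < 3 then r - 2 * (t - 1) else t - 1)).
- lia.
- move=> k; case: ifP => _; lia.
- rewrite !big_ord_recr big_ord0 /=; lia.
- move=> i; rewrite big_mkcond !big_ord_recr big_ord0 /=.
  case: i => [[|[|[|?]]] ?] //=; lia.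
- move=> i j; rewrite big_mkcond !big_ord_recr big_ord0 /=.
  case: i => [[|[|[|?]]] ?] //=; case: j => [[|[|[|?]]] ?] //= ij; lia.
Qed.

Lemma constr4 n r t : n = 3 * r - t -> 2 <= t -> 3 * t <= r + 3 -> r + 6 <= 5 * t ->
  exists F : 'I_4 -> kneser_vertex n r,
    forall i j, i != j -> 0 < #|val (F i) :&: val (F j)| < t.
Proof.
move=> hn ht hr hr2.
apply: (@construct n r t 4 10 r mm4 (fun k => if k < 4 then r - 3 * (t - 1) else t - 1)).
- lia.
- move=> k; case: ifP => _; lia.
- rewrite !big_ord_recr big_ord0 /=; lia.
- move=> i; rewrite big_mkcond !big_ord_recr big_ord0 /=.
  case: i => [[|[|[|[|?]]]] ?] //=; lia.
- move=> i j; rewrite big_mkcond !big_ord_recr big_ord0 /=.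
  case: i => [[|[|[|[|?]]]] ?] //=; case: j => [[|[|[|[|?]]]] ?] //= ij; lia.
Qed.

Theorem theorem4p8 (r n t : nat) :
  0 < r -> 0 < n -> 0 < t ->
  2 <= t -> t <= r - 1 -> n = 3 * r - t ->
  (5 * t <= r + 5 -> rho2_kneser n r = 3) /\
  (r + 5 < 5 * t -> 9 * t <= 2 * r + 9 -> rho2_kneser n r = 4).
Proof.
move=> hr hn ht ht2 htr1 hnd.
have htr : t <= r by lia.
split.
- move=> h5; apply/eqP; rewrite eqn_leq; apply/andP; split.
    by apply/bigmax_leqP => S hS; exact: (upper4 hnd htr ht h5 hS).
  have [F HF] : exists F : 'I_3 -> kneser_vertex n r,
      forall i j, i != j -> 0 < #|val (F i) :&: val (F j)| < t.
    apply: constr3 => //; lia.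
  exact: (lower hnd htr HF).
- move=> h5 h9; apply/eqP; rewrite eqn_leq; apply/andP; split.
    by apply/bigmax_leqP => S hS; exact: (upper5 hnd htr h9 hS).
  have [F HF] : exists F : 'I_4 -> kneser_vertex n r,
      forall i j, i != j -> 0 < #|val (F i) :&: val (F j)| < t.
    apply: constr4 => //; lia.
  exact: (lower hnd htr HF).
Qed.
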